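(* Let $n_1,n_2,n_3$ be integers with $3\le n_1,n_2\le n_3$ and $3\max(n_1,n_2)\le 2n_3\le n_1n_2$. For every set $W$ produced by the Middle Cone Construction described below, the landmark graph $\mathcal{G}(W)$ contains no bad $4$-cycle.
   Context: For a vertex set $W$ of $K_{n_1}\times K_{n_2}\times K_{n_3}$ (vertices are triples $(x_1,x_2,x_3)$, $1\le x_i\le n_i$), $W_{i,a}=\{w\in W:w_i=a\}$; the landmark graph $\mathcal{G}(W)$ is the hypergraph on $W$ whose hyperedges are the nonempty $W_{i,a}$, colored $i$. Bad $4$-cycle: distinct $w_1,\dots,w_4\in W$ and $\{i,j,k\}=\{1,2,3\}$ such that $\{w_1,w_2\}$ and $\{w_3,w_4\}$ are hyperedges of color $i$, $w_2,w_3$ lie in a common hyperedge of color $j$, and $w_4,w_1$ lie in a common hyperedge of color $k$. Multiplicities: write $n_3=qn_1+r$, $0\le r\le n_1-1$. If $r\le n_1-r$, $(\ell_1,\dots,\ell_{n_1})$ is $(q+1,q)$ repeated $r$ times followed by $n_1-2r$ copies of $q$; if $r>n_1-r$, it is $(q+1,q)$ repeated $n_1-r$ times followed by $2r-n_1$ copies of $q+1$. Let $L_i=\sum_{j<i}\ell_j$; block $i$ is the set of columns $c$ with $L_i<c\le L_i+\ell_i$; $s_i=L_i+1$. Middle Cone Construction: $W=W^L\cup W^R$, each consisting of $n_3$ landmarks indexed by columns $c=1,\dots,n_3$. Left column $c$ in block $i$ is $(i,y^L_c,c)$; right column $c$ in block $i$ is $(i+1,y^R_c,c)$ with $n_1+1$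 read as $1$. Even $n_2$, $h=n_2/2$: $y^L_c=((c-1)\bmod h)+1$, $y^R_c=h+((c-1)\bmod h)+1$. Odd $n_2$, $f=(n_2-1)/2$, $k=\#\{i:\ell_i>f\}$: let $S=\{s_i:\ell_i>f\}$ if $k\ge2$ and $S=\{1\}$ if $k\le1$. Set $y^L_c=n_2$ for $c\in S$ and fill the other left columns in increasing order with $1,\dots,f,1,\dots,f,\dots$; set $y^R_c=n_2$ for $c\in S+1$ and fill the other right columns in increasing order with $f+1,\dots,2f,f+1,\dots,2f,\dots$. If $k\le1$, additionally change one left landmark of the form $(x,1,z)$ with $x\notin\{1,2,n_1\}$ to $(x,n_2,z)$ (any such choice). *)

(* Defs.v *)
From mathcomp Require Import all_boot.
Set Implicit Arguments. Unset Strict Implicit. Unset Printing Implicit Defensive.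

(* Vertices of K_{n1} x K_{n2} x K_{n3}: triples (x1,x2,x3). *)
Definition vtx := (nat * nat * nat)%type.
Definition coord (i : nat) (v : vtx) : nat :=
  match i with 1 => v.1.1 | 2 => v.1.2 | _ => v.2 end.

Definition vset := vtx -> Prop.

(* {u,v} is exactly a hyperedge W_{i,a} of color i (for some a). *)
Definition is_hedge2 (W : vset) (i : nat) (u v : vtx) : Prop :=
  exists a, forall w, (W w /\ coord i w = a) <-> (w = u \/ w = v).

Definition bad4cycle (W : vset) : Prop :=
  exists (w1 w2 w3 w4 : vtx) (i j k : nat),
    [/\ W w1, W w2, W w3 & W w4] /\
    (w1 <> w2 /\ w1 <> w3 /\ w1 <> w4 /\ w2 <> w3 /\ w2 <> w4 /\ w3 <> w4) /\
    (i \in [:: 1; 2; 3] /\ j \in [:: 1; 2; 3] /\ k \in [:: 1; 2; 3] /\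
        i != j /\ i != k /\ j != k) /\
    [/\ is_hedge2 W i w1 w2, is_hedge2 W i w3 w4,
        coord j w2 = coord j w3 & coord k w4 = coord k w1].

Section MCC.
Variables n1 n2 n3 : nat.

Definition qq := n3 %/ n1.
Definition rr := n3 %% n1.

Definition ell (i : nat) : nat :=
  if rr <= n1 - rr then
    (if i <= 2 * rr then (if odd i then qq.+1 else qq) else qq)
  else
    (if i <= 2 * (n1 - rr) then (if odd i then qq.+1 else qq) else qq.+1).

Definition LL (i : nat) : nat := \sum_(1 <= j < i) ell j.
Definition ss (i : nat) : nat := LL i + 1.

Definition in_block (i c : nat) : Prop := LL i < c <= LL i + ell i.

Definition hh := n2 %/ 2.
Definition yL_even (c : nat) : nat := ((c - 1) %% hh) + 1.
Definition yR_even (c : nat) : nat := hh + ((c - 1) %% hh) + 1.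

Definition ff := (n2 - 1) %/ 2.
Definition kk : nat := count (fun i => ff < ell i) (iota 1 n1).
Definition inS (c : nat) : bool :=
  if 2 <= kk then has (fun i => (ff < ell i) && (c == ss i)) (iota 1 n1)
  else c == 1.
Definition inS1 (c : nat) : bool := (0 < c) && inS c.-1.
Definition yL_odd (c : nat) : nat :=
  if inS c then n2
  else (count (fun c' => ~~ inS c') (iota 1 (c - 1)) %% ff) + 1.
Definition yR_odd (c : nat) : nat :=
  if inS1 c then n2
  else ff + (count (fun c' => ~~ inS1 c') (iota 1 (c - 1)) %% ff) + 1.

Definition yL (c : nat) : nat := if odd n2 then yL_odd c else yL_even c.
Definition yR (c : nat) : nat := if odd n2 then yR_odd c else yR_even c.

Definition succ1 (i : nat) : nat := if i == n1 then 1 else i.+1.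

Definition WL0 : vset := fun v =>
  exists i c, [/\ 1 <= i <= n1, 1 <= c <= n3, in_block i c & v = (i, yL c, c)].
Definition WR0 : vset := fun v =>
  exists i c, [/\ 1 <= i <= n1, 1 <= c <= n3, in_block i c & v = (succ1 i, yR c, c)].
Definition W0 : vset := fun v => WL0 v \/ WR0 v.

Definition middle_cone (W : vset) : Prop :=
  if odd n2 && (kk <= 1) then
    exists x z, [/\ WL0 (x, 1, z), x \notin [:: 1; 2; n1] &
      forall v, W v <-> ((W0 v /\ v <> (x, 1, z)) \/ v = (x, n2, z))]
  else forall v, W v <-> W0 v.

End MCC.

(* Main.v *)
Require Import Defs.
From mathcomp Require Import all_boot.
From mathcomp Require Import zify.
Set Implicit Arguments. Unset Strict Implicit. Unset Printing Implicit Defensive.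

Lemma count2 (T : eqType) (p : pred T) s : uniq s -> 1 < count p s ->
  exists a b, [/\ a \in s, b \in s, a != b, p a & p b].
Proof.
elim: s => [|x s IH] //= /andP [xs us].
case: (boolP (p x)) => px /=.
- rewrite add1n ltnS -has_count => /hasP [b bs pb].
  exists x, b; split => //; rewrite ?inE ?eqxx ?bs ?orbT //.
  by apply/eqP => e; move: xs; rewrite e bs.
- rewrite add0n => /(IH us) [a [b [as' bs ab pa pb]]].
  by exists a, b; rewrite !inE as' bs !orbT.
Qed.

Lemma cnt_shift (P : pred nat) c d : 0 < c <= d ->
  count (fun c' => ~~ P c') (iota 1 (d - 1)) =
  count (fun c' => ~~ P c') (iota 1 (c - 1)) + count (fun c' => ~~ P c') (iota c (d - c)).
Proof.
move=> hcd; have -> : d - 1 = (c - 1) + (d - c) by lia.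
by rewrite iotaD count_cat; congr (_ + count _ (iota _ _)); lia.
Qed.

Lemma mod_neq t m f : (t + m) %% f = t %% f -> 0 < m -> m < f -> False.
Proof.
move=> /eqP + hm0 hm1; have hm : 0 < m < f by rewrite hm0. rewrite -{2}[t]addn0 eqn_modDl modn_small; last by lia.
rewrite mod0n; lia.
Qed.

Lemma cnt_pos (P : pred nat) c d : c < d -> ~~ P c -> 0 < count (fun c' => ~~ P c') (iota c (d - c)).
Proof.
move=> hcd hc; have -> : d - c = (d - c - 1).+1 by lia.
by rewrite /= hc.
Qed.

Lemma cnt_pos2 (P : pred nat) c d p : c <= p < d -> ~~ P p ->
  0 < count (fun c' => ~~ P c') (iota c (d - c)).
Proof.
move=> hp Pp; rewrite -has_count; apply/hasP; exists p => //; rewrite mem_iota; lia.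
Qed.

Lemma cnt_le (P : pred nat) c n : count (fun c' => ~~ P c') (iota c n) <= n.
Proof. by rewrite -{2}(size_iota c n) count_size. Qed.

Lemma cnt_le1 (P : pred nat) c n p : c <= p < c + n -> P p ->
  count (fun c' => ~~ P c') (iota c n) < n.
Proof.
move=> hp Pp.
have E : count (fun c' => ~~ P c') (iota c n) = count (predC P) (iota c n) by apply: eq_count.
have := count_predC P (iota c n); rewrite size_iota -E.
have : 0 < count P (iota c n).
  rewrite -has_count; apply/hasP; exists p => //; rewrite mem_iota; lia.
lia.
Qed.

Section Blocks.
Variables n1 n3 : nat.
Hypothesis hn1 : 3 <= n1.
Hypothesis h13 : n1 <= n3.
Hypothesis h3 : 3 * n1 <= 2 * n3.
Variable n2 : nat.
Hypothesis hn2 : 3 <= n2.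
Hypothesis hprod : 2 * n3 <= n1 * n2.
Local Notation q := (qq n1 n3).
Local Notation r := (rr n1 n3).
Local Notation ell := (ell n1 n3).
Local Notation LL := (LL n1 n3).
Local Notation inb := (in_block n1 n3).

Lemma divE : n3 = q * n1 + r.
Proof. by rewrite /qq /rr -divn_eq. Qed.
Lemma r_lt : r < n1.
Proof. rewrite /rr ltn_pmod //; lia. Qed.
Lemma q_ge1 : 1 <= q.
Proof. have := divE; have := r_lt; case: q => [|q']; nia. Qed.

Lemma ell_cases i : ell i = q \/ (ell i = q.+1 /\ 0 < r).
Proof.
rewrite /ell; case: ifP => H1; case: ifP => H2 //; try case: ifP => H3 //; try by left.
all: right; split => //; lia.
Qed.

Lemma ell_ge1 i : 0 < ell i.
Proof. have := q_ge1; case: (ell_cases i) => [->|[-> _]] //. Qed.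

Lemma ell1 : 2 <= ell 1.
Proof.
have E := divE; have := r_lt; have := q_ge1.
rewrite /ell; case: ifP => H1.
- case: ifP => H2 /=; first lia.
  have r0 : r = 0 by lia.
  move: E; rewrite r0 => E. case: q E => [|[|q']]; nia.
- case: ifP => H2 /=; lia.
Qed.

Lemma LL_S i : 0 < i -> LL i.+1 = LL i + ell i.
Proof. by move=> hi; rewrite /LL big_nat_recr. Qed.

Lemma LL1 : LL 1 = 0.
Proof. by rewrite /LL big_geq. Qed.

Lemma LL_mono i j : 0 < i -> i <= j -> LL i <= LL j.
Proof.
move=> hi; elim: j => [|j IH]; first lia.
rewrite leq_eqVlt => /orP [/eqP -> //|]; rewrite ltnS => hij.
rewrite LL_S; [have := IH hij; lia | lia].
Qed.

Lemma inb_uniq i j c : 0 < i -> 0 < j -> inb i c -> inb j c -> i = j.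
Proof.
move=> hi hj; rewrite /in_block.
wlog: i j hi hj / i < j.
  move=> W Hi Hj; case: (ltngtP i j) => h.
  - exact: W. - by apply/esym; apply: W. - done.
move=> hij Hi Hj.
have := LL_mono (i:=i.+1) (j:=j) (ltn0Sn _) hij.
rewrite LL_S //; lia.
Qed.

Lemma LL_closed1 (b : r <= n1 - r) i :
  LL i.+1 = i * q + minn r (uphalf i).
Proof.
elim: i => [|i IH]; first by rewrite LL1 mul0n.
rewrite LL_S // IH /ell b mulSn.
have O := odd_double_half i; have U := uphalf_half i.
rewrite /= -/(uphalf i) -/(half i) in U O *.
case: (odd i) O U => /= O U.
- case: ifP => h; lia.
- case: ifP => h; lia.
Qed.

Lemma LL_closed2 (b : ~~ (r <= n1 - r)) i :
  LL i.+1 = i * q + minn (n1 - r) (uphalf i) + (i - 2 * (n1 - r)).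
Proof.
elim: i => [|i IH]; first by rewrite LL1 mul0n.
rewrite LL_S // IH /ell (negbTE b) mulSn.
have O := odd_double_half i; have U := uphalf_half i.
rewrite /= -/(uphalf i) -/(half i) in U O *.
case: (odd i) O U => /= O U.
- case: ifP => h; lia.
- case: ifP => h; lia.
Qed.

Lemma LL_total : LL n1.+1 = n3.
Proof.
have E := divE; have := r_lt.
have O := odd_double_half n1; have U := uphalf_half n1.
case: (boolP (r <= n1 - r)) => b.
- rewrite LL_closed1 //; case: (odd n1) O U => /= O U; lia.
- rewrite LL_closed2 //; case: (odd n1) O U => /= O U; lia.
Qed.

Lemma inb_range i c : 0 < i <= n1 -> inb i c -> 0 < c <= n3.
Proof.
move=> /andP [hi hin]; rewrite /in_block => Hc.
have := LL_mono (i:=i.+1) (j:=n1.+1) (ltn0Sn _) hin.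
rewrite LL_S // LL_total; lia.
Qed.

Local Notation f := (ff n2).
Local Notation h := (hh n2).
Local Notation kk := (kk n1 n2 n3).
Local Notation inS := (inS n1 n2 n3).
Local Notation sc := (succ1 n1).

Lemma f_ge1 : 1 <= f. Proof. rewrite /ff; lia. Qed.
Lemma h_ge1 : 1 <= h. Proof. rewrite /hh; lia. Qed.
Lemma n2_odd : odd n2 -> n2 = f.*2.+1.
Proof. move=> o; have := odd_double_half n2; rewrite o /ff; lia. Qed.
Lemma n2_even : ~~ odd n2 -> n2 = h.*2.
Proof. move=> o; have := odd_double_half n2; rewrite (negbTE o) /hh; lia. Qed.

Lemma ell_le_h : ~~ odd n2 -> forall i, ell i <= h.
Proof.
move=> o i; have E := n2_even o; have D := divE; have := r_lt.
case: (ell_cases i) => [->|[-> r0]]; nia.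
Qed.

Lemma long_char (o : odd n2) i : f < ell i ->
  [/\ q = f, 0 < r, 2 * r <= n1, odd i & (i <= 2 * r /\ ell i = f.+1)].
Proof.
move=> hl; have E := n2_odd o; have D := divE; have := r_lt.
have hq : q = f.
  case: (ell_cases i) hl => [->|[-> _]] hl; nia.
have hr : 2 * r <= n1 by nia.
move: hl; rewrite /ell; case: ifP => b1.
- case: ifP => b2; last by lia.
  case: ifP => b3; last by lia.
  move=> _; split => //; try split; lia.
- move=> _; exfalso; lia.
Qed.

Lemma long_conv (o : odd n2) i : q = f -> 0 < r -> odd i -> i <= 2 * r -> f < ell i.
Proof.
move=> hq hr oi hi; have E := n2_odd o; have D := divE.
have hr2 : 2 * r <= n1 by nia.
rewrite /ell; have -> : r <= n1 - r by lia.
by rewrite hi oi; lia.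
Qed.

Lemma ell_le (o : odd n2) i : ell i <= f.+1.
Proof. case: (leqP (ell i) f) => [|/(long_char o)[_ _ _ _ [_ ->]]] //; lia. Qed.

Lemma long_adj (o : odd n2) i : 0 < i <= n1 -> f < ell i -> f < ell (sc i) -> False.
Proof.
move=> hi /(long_char o) [_ _ h2 oi [ii _]] /(long_char o) [_ _ _ osi _].
move: osi; rewrite /succ1; case: ifP => [/eqP e|ne] /=.
- move: oi ii h2; rewrite e => oi ii h2.
  have : n1 = (r.*2) by lia. move=> e2; move: oi; by rewrite e2 odd_double.
- by rewrite oi.
Qed.

Lemma kk_le1 (o : odd n2) : kk <= 1 -> forall i, 1 < i <= n1 -> ell i <= f.
Proof.
move=> hk i hi; case: (leqP (ell i) f) => // hl; exfalso.
have [hq hr _ _ _] := long_char o hl.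
have l1 : f < ell 1 by apply: long_conv => //; lia.
have : 2 <= kk; last by lia.
rewrite /kk -size_filter.
have -> : 2 = size [:: 1; i] by [].
apply: uniq_leq_size; first by rewrite /= inE andbT; apply/eqP; lia.
move=> y; rewrite !inE => /orP [/eqP ->|/eqP ->]; rewrite mem_filter mem_iota;
  apply/andP; split => //; lia.
Qed.

Lemma kk_ge2 : 2 <= kk -> exists i1 i2,
  [/\ 0 < i1 <= n1, 0 < i2 <= n1, i1 != i2, f < ell i1 & f < ell i2].
Proof.
move=> hk; have [a [b [ai bi ab pa pb]]] := count2 (iota_uniq 1 n1) hk.
move: ai bi; rewrite !mem_iota => ai bi.
exists a, b; split => //; lia.
Qed.

Lemma inS0 : inS 0 = false.
Proof.
rewrite /Defs.inS; case: ifP => // _; apply/hasP => [[i _ /andP [_ /eqP]]].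
by rewrite /ss addn1.
Qed.

Lemma S2 (o : odd n2) c : inS c -> exists i,
  [/\ 0 < i <= n1, c = LL i + 1, 2 <= ell i & (if 2 <= kk then f < ell i else i == 1)].
Proof.
rewrite /Defs.inS; case: ifP => hk.
- move/hasP => [i]; rewrite mem_iota => hi /andP [hl /eqP ->].
  exists i; split; first lia.
  + by rewrite /ss.
  + have := f_ge1; lia.
  + exact: hl.
- move/eqP => ->; exists 1; split; first lia.
  + by rewrite LL1.
  + exact: ell1.
  + by [].
Qed.

Lemma blockL (o : odd n2) i : 0 < i <= n1 ->
  ell i <= f \/ (ell i = f.+1 /\ inS (LL i + 1)).
Proof.
move=> hi; case: (leqP (ell i) f) => hl; [by left | right].
have [_ _ _ _ [_ e]] := long_char o hl; split => //.
rewrite /Defs.inS; case: ifP => hk.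
- apply/hasP; exists i; first by rewrite mem_iota; lia.
  by rewrite hl /ss eqxx.
- have i1 : i = 1.
    case: (ltnP 1 i) => h1; last by lia.
    have : 1 < i <= n1 by lia. have hk1 : kk <= 1 by rewrite leqNgt hk. move=> /(kk_le1 o hk1) ; lia.
  by rewrite i1 LL1.
Qed.

Local Notation inS1 := (inS1 n1 n2 n3).
Local Notation yL := (yL n1 n2 n3).
Local Notation yR := (yR n1 n2 n3).

Lemma inS1_S c : inS1 c.+1 = inS c. Proof. by []. Qed.
Lemma inS1_0 : inS1 0 = false. Proof. by []. Qed.

Lemma t1_eq m : count (fun c' => ~~ inS1 c') (iota 1 m) =
  count (fun c' => ~~ inS c') (iota 1 m) + inS m.
Proof.
elim: m => [|m IH]; first by rewrite inS0.
have -> : iota 1 m.+1 = iota 1 m ++ [:: m.+1] by rewrite -(addn1 m) iotaD add1n addn1.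
rewrite !count_cat IH /= inS1_S.
case: (inS m); case: (inS m.+1) => /=; lia.
Qed.

Definition tt c := count (fun c' => ~~ inS c') (iota 1 (c - 1)).

Lemma tt_shift c d : 0 < c <= d ->
  tt d = tt c + count (fun c' => ~~ inS c') (iota c (d - c)).
Proof. exact: cnt_shift. Qed.

Variables (md : bool) (x z : nat).
Hypothesis Hmd : md -> [/\ odd n2, kk <= 1, 0 < x <= n1, inb x z & x \notin [:: 1; 2; n1]].
Hypothesis Hmd2 : odd n2 -> kk <= 1 -> md.

Definition yl c := if md && (c == z) then n2 else yL c.
Definition yr c := yR c.

Lemma ylO (o : odd n2) c : yl c = if inS c || md && (c == z) then n2 else tt c %% f + 1.
Proof.
rewrite /yl /Defs.yL o /yL_odd.
by case: (md && (c == z)); case: (inS c).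
Qed.

Lemma yrO (o : odd n2) c : yr c = if inS1 c then n2 else f + tt c %% f + 1.
Proof.
rewrite /yr /Defs.yR o /yR_odd; case: ifP => // h1.
case: c h1 => [|c] h1; first by [].
rewrite /tt subn1 /= t1_eq.
by rewrite inS1_S in h1; rewrite h1 addn0.
Qed.

Lemma md_odd : md -> odd n2. Proof. by case/Hmd. Qed.

Lemma ylE (e : ~~ odd n2) c : yl c = (c - 1) %% h + 1.
Proof.
rewrite /yl; case: (boolP md) => m /=; first by move: e; rewrite md_odd.
by rewrite /Defs.yL (negbTE e) /yL_even.
Qed.

Lemma yrE (e : ~~ odd n2) c : yr c = h + (c - 1) %% h + 1.
Proof. by rewrite /yr /Defs.yR (negbTE e) /yR_even. Qed.

Lemma S2b (o : odd n2) c i : inS c -> 0 < i <= n1 -> inb i c ->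
  [/\ c = LL i + 1, inb i c.+1 & (if 2 <= kk then f < ell i else i == 1)].
Proof.
move=> /(S2 o) [i' [hi' ce el hk]] hi hb.
have bi' : inb i' c by rewrite /in_block; lia.
have e : i = i' by apply: (inb_uniq (c:=c)) => //; lia.
subst i'; split => //; rewrite /in_block; lia.
Qed.

Lemma S1b (o : odd n2) c i : inS1 c -> 0 < i <= n1 -> inb i c ->
  [/\ c = LL i + 2, inb i c.-1 & (if 2 <= kk then f < ell i else i == 1)].
Proof.
case: c => [|c]; first by [].
rewrite inS1_S => /(S2 o) [i' [hi' ce el hk]] hi hb.
have bi' : inb i' c.+1 by rewrite /in_block; lia.
have e : i = i' by apply: (inb_uniq (c:=c.+1)) => //; lia.
subst i'; split => //; [lia | rewrite /in_block /=; lia].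
Qed.

Lemma S_nonadj (o : odd n2) c : inS c -> inS c.+1 -> False.
Proof.
move=> h1 h2; have [i [hi ce el _]] := S2 o h1.
have bi : inb i c by rewrite /in_block; lia.
have [e1 _ _] := S2b o h1 hi bi.
have bi1 : inb i c.+1 by rewrite /in_block; lia.
have [e2 _ _] := S2b o h2 hi bi1.
lia.
Qed.

Lemma x_ne1 : md -> x != 1. Proof. by case/Hmd => _ _ _ _; rewrite !inE; case: eqP. Qed.
Lemma x_nen1 : md -> x != n1.
Proof. by case/Hmd => _ _ _ _; rewrite !inE; case: (x == n1); rewrite ?orbT. Qed.

Lemma z_block i : md -> 0 < i <= n1 -> inb i z -> i = x.
Proof. move=> m hi hb; case: (Hmd m) => _ _ hx bx _; apply: (inb_uniq (c:=z)) => //; lia. Qed.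

Lemma inS_kk1 c : kk <= 1 -> inS c = (c == 1).
Proof. by move=> hk; rewrite /Defs.inS ifN // -leqNgt. Qed.

Lemma inb11 : inb 1 1. Proof. rewrite /in_block LL1; have := ell1; lia. Qed.
Lemma inb12 : inb 1 2. Proof. rewrite /in_block LL1; have := ell1; lia. Qed.

Lemma z_ne12 : md -> z != 1 /\ z != 2.
Proof.
move=> m; have := x_ne1 m; case: (Hmd m) => _ _ hx bx _ xn1.
split; apply/eqP => ez; move: bx; rewrite ez => bx.
- have := inb_uniq (c:=1) (i:=1) (j:=x) (ltn0Sn _) _ inb11 bx; move: xn1; case: eqP => //; lia.
- have := inb_uniq (c:=2) (i:=1) (j:=x) (ltn0Sn _) _ inb12 bx; move: xn1; case: eqP => //; lia.
Qed.

Lemma inS_md c i : md -> inS c -> 0 < i <= n1 -> inb i c -> i = 1.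
Proof.
move=> m; case: (Hmd m) => _ hk _ _ _; rewrite inS_kk1 // => /eqP -> hi hb.
by apply: (inb_uniq (c:=1)) => //; [lia | exact: inb11].
Qed.

Lemma x_pos : md -> 0 < x. Proof. by case/Hmd => _ _ /andP []. Qed.

Lemma P1l i c d : 0 < i <= n1 -> inb i c -> inb i d -> yl c = yl d -> c = d.
Proof.
move=> hi.
wlog: c d / c < d.
  move=> W hc hd e; case: (ltngtP c d) => hcd.
  - exact: W. - by move: (W d c hcd hd hc (esym e)). - done.
move=> hcd hc hd.
case: (boolP (odd n2)) => o.
- rewrite !ylO //.
  have n2e := n2_odd o; have f1 := f_ge1.
  have ltc := ltn_pmod (tt c) f1; have ltd := ltn_pmod (tt d) f1.
  case: (boolP (inS c)) => sc'; case: (boolP (inS d)) => sd /=.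
  + have [ec _ _] := S2b o sc' hi hc; have [ed _ _] := S2b o sd hi hd; lia.
  + case: (boolP (md && (d == z))) => mz; last by lia.
    move: mz => /andP [m /eqP dz]; move: hd; rewrite dz => hd.
    have := inS_md m sc' hi hc; have := z_block m hi hd; have := x_ne1 m.
    move=> /eqP; lia.
  + case: (boolP (md && (c == z))) => mz; last by lia.
    move: mz => /andP [m /eqP cz]; move: hc; rewrite cz => hc.
    have := inS_md m sd hi hd; have := z_block m hi hc; have := x_ne1 m.
    move=> /eqP; lia.
  + case: (boolP (md && (c == z))) => mc; case: (boolP (md && (d == z))) => md' //;
      try lia.
    move=> e; have : tt c %% f = tt d %% f by lia.
    rewrite (tt_shift (c:=c) (d:=d)); last by move: hc; rewrite /in_block; lia.
    move/esym/mod_neq => H; exfalso; apply: H; first exact: cnt_pos.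
    have := cnt_le inS c (d - c).
    case: (blockL o hi) => [le|[e1 s1]].
    * move: hc hd; rewrite /in_block; lia.
    * have : c != LL i + 1 by apply/eqP => e'; move: sc'; rewrite e' s1.
      move: hc hd; rewrite /in_block; lia.
- rewrite !ylE // => e.
  have : (c - 1) %% h = (c - 1 + (d - c)) %% h.
    have -> : c - 1 + (d - c) = d - 1 by move: hc; rewrite /in_block; lia.
    lia.
  move/esym/mod_neq => H; exfalso; apply: H; first lia. have := ell_le_h o i. have := h_ge1.
  move: hc hd; rewrite /in_block; lia.
Qed.

Lemma P1r i c d : 0 < i <= n1 -> inb i c -> inb i d -> yr c = yr d -> c = d.
Proof.
move=> hi.
wlog: c d / c < d.
  move=> W hc hd e; case: (ltngtP c d) => hcd.
  - exact: W. - by move: (W d c hcd hd hc (esym e)). - done.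
move=> hcd hc hd.
case: (boolP (odd n2)) => o.
- rewrite !yrO //.
  have n2e := n2_odd o; have f1 := f_ge1.
  have ltc := ltn_pmod (tt c) f1; have ltd := ltn_pmod (tt d) f1.
  case: (boolP (inS1 c)) => s1c; case: (boolP (inS1 d)) => s1d /=.
  + have [ec _ _] := S1b o s1c hi hc; have [ed _ _] := S1b o s1d hi hd; lia.
  + lia.
  + lia.
  + move=> e; have : tt c %% f = tt d %% f by lia.
    rewrite (tt_shift (c:=c) (d:=d)); last by move: hc; rewrite /in_block; lia.
    move/esym/mod_neq => H; exfalso; apply: H.
      case: (boolP (inS c)) => sc'; last exact: cnt_pos.
      apply: (@cnt_pos2 _ _ _ c.+1).
      + have : c.+1 != d by apply/eqP => e'; move: s1d; rewrite -e' inS1_S sc'.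
        lia.
      + by apply/negP => s'; apply: (S_nonadj o sc' s').
      case: (blockL o hi) => [le|[e1 s1]].
      * have := cnt_le inS c (d - c); move: hc hd; rewrite /in_block; lia.
      * case: (boolP (c == LL i + 1)) => ce.
        - have := @cnt_le1 inS c (d - c) (LL i + 1).
          move: hc hd; rewrite /in_block => hc hd.
          have H : c <= LL i + 1 < c + (d - c) by lia.
          move=> /(_ H s1); lia.
        - have : c != LL i + 2.
            apply/eqP => e'; move: s1c; rewrite e'.
            have -> : LL i + 2 = (LL i + 1).+1 by lia.
            by rewrite inS1_S s1.
          have := cnt_le inS c (d - c); move: hc hd; rewrite /in_block; lia.
- rewrite !yrE // => e.
  have : (c - 1) %% h = (c - 1 + (d - c)) %% h.
    have -> : c - 1 + (d - c) = d - 1 by move: hc; rewrite /in_block; lia.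
    lia.
  move/esym/mod_neq => H; exfalso; apply: H; first lia. have := ell_le_h o i. have := h_ge1.
  move: hc hd; rewrite /in_block; lia.
Qed.

Lemma P2 i j a b : 0 < i <= n1 -> 0 < j <= n1 -> inb i a -> inb j b ->
  yr a = yl b -> i = sc j -> False.
Proof.
move=> hi hj ha hb.
case: (boolP (odd n2)) => o; last first.
  rewrite yrE // ylE //; have := ltn_pmod (b - 1) h_ge1; lia.
rewrite yrO // ylO //; have n2e := n2_odd o; have f1 := f_ge1.
have := ltn_pmod (tt a) f1; have := ltn_pmod (tt b) f1.
case: (boolP (inS1 a)) => s1a; last by case: ifP => _; lia.
case: ifP => nb; last by lia.
move=> _ _ _ eij.
have [_ _ ka] := S1b o s1a hi ha.
case/orP: nb => [sb | /andP [m /eqP bz]].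
- have [_ _ kb] := S2b o sb hj hb.
  move: ka kb; case: ifP => hk.
  + move=> la lb; apply: (long_adj o hj lb); by rewrite -eij.
  + move=> /eqP i1 /eqP j1; move: eij; rewrite i1 j1 /succ1; case: eqP => //; lia.
- have [_ hk _ _ _] := Hmd m.
  move: ka; rewrite ifN; last by rewrite -leqNgt.
  move: hb; rewrite bz => hb.
  move=> /eqP i1; have jx := z_block m hj hb.
  have := x_nen1 m; have := x_pos m.
  move: eij; rewrite i1 jx /succ1; case: eqP => //; lia.
Qed.

Lemma kk1_md : odd n2 -> kk <= 1 -> md. Proof. exact: Hmd2. Qed.

Lemma inS_pred c : inS1 c -> inS c.-1.
Proof. by case: c. Qed.

Lemma tt_pred (o : odd n2) e : inS1 e -> tt e = tt e.-1.
Proof.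
case: e => [|e] //; rewrite inS1_S => se /=.
have e0 : 0 < e by case: e se => //; rewrite inS0.
rewrite (tt_shift (c:=e) (d:=e.+1)); last by lia.
rewrite subSnn /= se /=; lia.
Qed.

Lemma P3 i0 i1 d e : 0 < i0 <= n1 -> 0 < i1 <= n1 -> inb i0 d -> inb i1 e -> e <> d ->
  yl e = yl d ->
  (exists a i, [/\ 0 < i <= n1, inb i a & yr a = yl d]) \/
  (exists b i, [/\ 0 < i <= n1, inb i b & yl b = yr d]) \/
  (exists g, [/\ g <> d, inb i1 g & yr g = yr d]).
Proof.
move=> h0 h1 hd he ne.
case: (boolP (odd n2)) => o; last first.
  move=> E; right; right; exists e; split => //.
  by rewrite !ylE // in E; rewrite !yrE //; lia.
have n2e := n2_odd o; have f1 := f_ge1.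
have ltd := ltn_pmod (tt d) f1.
case: (boolP (inS d || md && (d == z))) => nd.
- move=> _; left; case/orP: nd => [sd | /andP [m /eqP dz]].
  + have [_ hd1 _] := S2b o sd h0 hd.
    exists d.+1, i0; split => //.
    by rewrite yrO // inS1_S sd ylO // sd.
  + have [_ hk _ _ _] := Hmd m.
    exists 2, 1; split; [lia | exact: inb12 |].
    by rewrite yrO // inS1_S inS_kk1 // ylO // dz m !eqxx /= orbT.
- case: (boolP (inS1 d)) => s1d.
  + move=> _; right; left; have [_ hdm _] := S1b o s1d h0 hd.
    exists d.-1, i0; split => //.
    by rewrite ylO // yrO // s1d (inS_pred s1d).
  + rewrite (ylO o d) (negbTE nd) ylO //.
    case: ifP => ne'; first by lia.
    move=> E; have E' : tt e %% f = tt d %% f by lia.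
    right; right.
    case: (boolP (inS1 e)) => s1e.
    * have [ee hem _] := S1b o s1e h1 he.
      have se := inS_pred s1e.
      exists e.-1; split => //.
      - move=> ed; move: nd; by rewrite -ed se.
      - rewrite !yrO // (negbTE s1d).
        have -> : inS1 e.-1 = false.
          apply/negP => s'; have := inS_pred s'.
          case: (e.-1) s' se => [|k] //= s' sk ss.
          exact: (S_nonadj o ss sk).
        rewrite -(tt_pred o s1e); lia.
    * exists e; split => //.
      rewrite !yrO // (negbTE s1e) (negbTE s1d); lia.
Qed.

Lemma P4 i j a b : 0 < i <= n1 -> 0 < j <= n1 -> inb i a -> inb j b -> yr a = yl b ->
  [/\ a <> b, inb i a.-1 & a.-1 <> a].
Proof.
move=> hi hj ha hb.
case: (boolP (odd n2)) => o; last first.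
  rewrite yrE // ylE //; have := ltn_pmod (b - 1) h_ge1; lia.
rewrite yrO // ylO //; have n2e := n2_odd o; have f1 := f_ge1.
have := ltn_pmod (tt a) f1; have := ltn_pmod (tt b) f1.
case: (boolP (inS1 a)) => s1a; last by case: ifP => _; lia.
case: ifP => nb; last by lia.
move=> _ _ _.
have [ea ham ka] := S1b o s1a hi ha.
split; [|exact: ham|lia].
move=> eab; subst b.
case/orP: nb => [sa | /andP [m /eqP az]].
- move: s1a sa; case: a {ha hb ham ea ka} => [|a'] // s1a sa.
  rewrite inS1_S in s1a; exact: (S_nonadj o s1a sa).
- have [_ hk _ _ _] := Hmd m.
  move: ka; rewrite ifN; last by rewrite -leqNgt.
  move: ha; rewrite az => ha /eqP i1.
  have := z_block m hi ha; have := x_ne1 m; rewrite i1 => /eqP; lia.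
Qed.

Definition Lv i c : vtx := (i, yl c, c).
Definition Rv i c : vtx := (sc i, yr c, c).
Definition V (v : vtx) := exists i c, [/\ 0 < i <= n1, inb i c & (v = Lv i c \/ v = Rv i c)].

Lemma yl_n2 (o : odd n2) i j a b : 0 < i <= n1 -> 0 < j <= n1 -> inb i a -> inb j b ->
  yl a = yr b -> yl a = n2.
Proof.
move=> hi hj ha hb.
rewrite yrO // ylO //; have n2e := n2_odd o; have f1 := f_ge1.
have := ltn_pmod (tt a) f1; have := ltn_pmod (tt b) f1.
case: ifP => //; case: ifP => _ _; lia.
Qed.

Lemma N3 i j a b : 0 < i <= n1 -> 0 < j <= n1 -> inb i a -> inb j b -> yl a = yr b ->
  exists u1 u2 u3, [/\ V u1, V u2, V u3,
     coord 2 u1 = yl a /\ coord 2 u2 = yl a /\ coord 2 u3 = yl a &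
     u1 <> u2 /\ u1 <> u3 /\ u2 <> u3].
Proof.
move=> hi hj ha hb E.
case: (boolP (odd n2)) => o; last first.
  move: E; rewrite yrE // ylE //; have := ltn_pmod (a - 1) h_ge1; lia.
rewrite (yl_n2 o hi hj ha hb E).
have f1 := f_ge1.
case: (leqP 2 kk) => hk.
- have [i1 [i2 [r1 r2 ne l1 l2]]] := kk_ge2 hk.
  have S i' : 0 < i' <= n1 -> f < ell i' -> inS (LL i' + 1).
    move=> ri li; rewrite /Defs.inS hk; apply/hasP; exists i'.
      by rewrite mem_iota; lia.
    by rewrite li /ss eqxx.
  have s1 := S _ r1 l1; have s2 := S _ r2 l2.
  have b1 : inb i1 (LL i1 + 1) by rewrite /in_block; lia.
  have b1' : inb i1 (LL i1 + 1).+1 by rewrite /in_block; lia.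
  have b2 : inb i2 (LL i2 + 1) by rewrite /in_block; lia.
  exists (Lv i1 (LL i1 + 1)), (Lv i2 (LL i2 + 1)), (Rv i1 (LL i1 + 1).+1).
  split.
  + by exists i1, (LL i1 + 1); split => //; left.
  + by exists i2, (LL i2 + 1); split => //; left.
  + by exists i1, (LL i1 + 1).+1; split => //; right.
  + by rewrite /= !ylO // s1 s2 /= yrO // inS1_S s1.
  + split; [|split]; move=> /(congr1 (fun v : vtx => v.2)) /= e12.
    * move: b2; rewrite -e12 => b2; move: ne; rewrite (inb_uniq (c:=LL i1 + 1) _ _ b1 b2) ?eqxx //; lia.
    * lia.
    * move: b2; rewrite e12 => b2; move: ne; rewrite (inb_uniq (c:=(LL i1 + 1).+1) _ _ b1' b2) ?eqxx //; lia.
- have hk1' : kk <= 1 by lia.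
  have m := Hmd2 o hk1'.
  have [_ hk1 hx bx _] := Hmd m; have [z1 z2] := z_ne12 m.
  exists (Lv 1 1), (Lv x z), (Rv 1 2).
  split.
  + by exists 1, 1; split => //; [lia | exact: inb11 | left].
  + by exists x, z; split => //; left.
  + by exists 1, 2; split => //; [lia | exact: inb12 | right].
  + by rewrite /= !ylO // yrO // inS1_S !inS_kk1 // m !eqxx !orbT.
  + split; [|split]; move=> /(congr1 (fun v : vtx => v.2)) /= e12.
    * by move: z1; rewrite -e12.
    * done.
    * by move: z2; rewrite e12.
Qed.

Lemma sc_inj i j : 0 < i <= n1 -> 0 < j <= n1 -> sc i = sc j -> i = j.
Proof. rewrite /succ1 => hi hj; case: eqP => ei; case: eqP => ej; lia. Qed.

Lemma sc_nofix i : 0 < i <= n1 -> sc i <> i.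
Proof. rewrite /succ1 => hi; case: eqP => ei; lia. Qed.

Lemma neighbor i d : inb i d -> (exists d', d' <> d /\ inb i d') \/ (forall c, inb i c -> c = d).
Proof.
rewrite /in_block => hd.
case: (ltnP (LL i + 1) d) => h1.
  by left; exists d.-1; split; [lia | rewrite /in_block; lia].
case: (ltnP d (LL i + ell i)) => h2.
  by left; exists d.+1; split; [lia | rewrite /in_block; lia].
by right => c hc; lia.
Qed.

Variable W : vset.
Hypothesis HW : forall v, W v <-> V v.

Lemma hedge_mem k p q : is_hedge2 W k p q -> forall w, W w -> coord k w = coord k p -> w = p \/ w = q.
Proof.
move=> [a Ha] w Ww E; apply/Ha; split => //.
by rewrite E; case: (Ha p) => _ /(_ (or_introl erefl)) [].
Qed.

Lemma hedge_in k p q : is_hedge2 W k p q -> [/\ W p, W q & coord k q = coord k p].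
Proof.
move=> [a Ha].
case: (Ha p) => _ /(_ (or_introl erefl)) [Wp Ep].
case: (Ha q) => _ /(_ (or_intror erefl)) [Wq Eq].
by split => //; rewrite Ep Eq.
Qed.

Lemma hedge_sym k p q : is_hedge2 W k p q -> is_hedge2 W k q p.
Proof. move=> [a Ha]; exists a => w; rewrite Ha; tauto. Qed.

Lemma hedge3 k p q : is_hedge2 W k p q ->
  (exists u1 u2 u3, [/\ V u1, V u2, V u3,
     coord k u1 = coord k p /\ coord k u2 = coord k p /\ coord k u3 = coord k p &
     u1 <> u2 /\ u1 <> u3 /\ u2 <> u3]) -> False.
Proof.
move=> H [u1 [u2 [u3 [V1 V2 V3 [E1 [E2 E3]] [n12 [n13 n23]]]]]].
have M := hedge_mem H.
case: (M u1 (proj2 (HW _) V1) E1) => e1;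
case: (M u2 (proj2 (HW _) V2) E2) => e2;
case: (M u3 (proj2 (HW _) V3) E3) => e3; subst; tauto.
Qed.

Lemma VL i c : 0 < i <= n1 -> inb i c -> W (Lv i c).
Proof. by move=> hi hc; apply/HW; exists i, c; split => //; left. Qed.
Lemma VR i c : 0 < i <= n1 -> inb i c -> W (Rv i c).
Proof. by move=> hi hc; apply/HW; exists i, c; split => //; right. Qed.

Lemma LvE i c i' c' : Lv i c = Lv i' c' -> i = i' /\ c = c'.
Proof. by case=> -> _ ->. Qed.
Lemma RvE i c i' c' : Rv i c = Rv i' c' -> sc i = sc i' /\ c = c'.
Proof. by case=> -> _ ->. Qed.
Lemma LRvE i c i' c' : Lv i c = Rv i' c' -> i = sc i' /\ c = c'.
Proof. by case=> -> _ ->. Qed.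

Lemma col_pair u v : V u -> V v -> u <> v -> coord 3 u = coord 3 v ->
  exists i c, [/\ 0 < i <= n1, inb i c &
    ((u = Lv i c /\ v = Rv i c) \/ (u = Rv i c /\ v = Lv i c))].
Proof.
move=> [i [c [hi hc Eu]]] [i' [c' [hi' hc' Ev]]] ne.
case: Eu => Eu; case: Ev => Ev; subst u v => /= ecc; subst c';
  have ei : i' = i by apply: (inb_uniq (c:=c)) => //; lia.
all: subst i'; exists i, c; split => //; first [tauto | by exfalso; apply: ne].
Qed.

Lemma core2 u v d i0 : 0 < i0 <= n1 -> inb i0 d ->
  is_hedge2 W 2 u (Lv i0 d) -> is_hedge2 W 2 v (Rv i0 d) ->
  u <> Lv i0 d -> v <> Rv i0 d -> u <> v -> coord 1 u = coord 1 v -> False.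
Proof.
move=> h0 hd hu hv nu nv nuv E1.
have hu' := hedge_sym hu; have hv' := hedge_sym hv.
have [_ Wu Eu] := hedge_in hu'; have [_ Wv Ev] := hedge_in hv'.
move/HW: Wu => [i1 [e [h1 he Ue]]]; move/HW: Wv => [i2 [f [h2 hf Vf]]].
case: Ue => Ue; subst u; last first.
  apply: (hedge3 hu'); apply: (N3 h0 h1 hd he); exact: (esym Eu).
case: Vf => Vf; subst v.
  apply: (hedge3 hv'); rewrite -Ev; apply: (N3 h2 h0 hf hd); exact: Ev.
move: Eu Ev E1 => /= Eu Ev E1.
have ne : e <> d.
  move=> ed; subst e; apply: nu; congr (_, _, _).
  by apply: (inb_uniq (c:=d)) => //; lia.
case: (P3 h0 h1 hd he ne Eu) => [[a [i [hi ha Ea]]]|[[b [i [hi hb Eb]]]|[g [ng hg Eg]]]].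
- apply: (hedge3 hu'); apply: (N3 h0 hi hd ha); exact: (esym Ea).
- apply: (hedge3 hv'); rewrite /= -Eb; apply: (N3 hi h0 hb hd); exact: Eb.
- case: (hedge_mem hv' (VR h1 hg) Eg) => /RvE [E2 E3].
  + by apply: ng.
  + have ei := sc_inj h1 h2 E2; subst i2.
    exact: (sc_nofix h1 (esym E1)).
Qed.

Lemma core1 u v d i0 : 0 < i0 <= n1 -> inb i0 d ->
  is_hedge2 W 1 u (Lv i0 d) -> is_hedge2 W 1 v (Rv i0 d) ->
  u <> Lv i0 d -> v <> Rv i0 d -> u <> v -> coord 2 u = coord 2 v -> False.
Proof.
move=> h0 hd hu hv nu nv nuv E2.
have hu' := hedge_sym hu; have hv' := hedge_sym hv.
have [_ Wu Eu] := hedge_in hu'; have [_ Wv Ev] := hedge_in hv'.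
case: (neighbor hd) => [[d' [nd hd']]|Hall].
- case: (hedge_mem hu' (VL h0 hd') erefl) => [/LvE [_ /nd []]|eu].
  case: (hedge_mem hv' (VR h0 hd') erefl) => [/RvE [_ /nd []]|ev].
  subst u v; move: E2 => /= E2.
  by case: (P4 h0 h0 hd' hd' (esym E2)).
- move/HW: Wu => [i1 [e [h1 he Ue]]]; move/HW: Wv => [i2 [f [h2 hf Vf]]].
  case: Ue => Ue; subst u.
    move: Eu => /= Eu; subst i1; apply: nu; by rewrite (Hall _ he).
  case: Vf => Vf; subst v; last first.
    move: Ev => /= /(sc_inj h2 h0) Ev; subst i2; apply: nv; by rewrite (Hall _ hf).
  move: Eu Ev E2 => /= Eu Ev E2.
  have [_ he1 ne1] := P4 h1 h2 he hf E2.
  case: (hedge_mem hu' (VR h1 he1) Eu) => [/esym /LRvE [E3 E4]|/RvE [_ /ne1 []]].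
  have ei : i1 = i0.
    apply: (inb_uniq (c:=d)) => //; try lia. by rewrite E4.
  subst i1; exact: (sc_nofix h0 (esym E3)).
Qed.

Lemma core ci co u v d i0 : (ci = 1 /\ co = 2) \/ (ci = 2 /\ co = 1) -> 0 < i0 <= n1 -> inb i0 d ->
  is_hedge2 W ci u (Lv i0 d) -> is_hedge2 W ci v (Rv i0 d) ->
  u <> Lv i0 d -> v <> Rv i0 d -> u <> v -> coord co u = coord co v -> False.
Proof. by case => [[-> ->]|[-> ->]]; [exact: core1 | exact: core2]. Qed.

Lemma case12 ci co w1 w2 w3 w4 j k : (ci = 1 /\ co = 2) \/ (ci = 2 /\ co = 1) ->
  V w1 -> V w2 -> V w3 -> V w4 ->
  (w1 <> w2 /\ w1 <> w3 /\ w1 <> w4 /\ w2 <> w3 /\ w2 <> w4 /\ w3 <> w4) ->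
  is_hedge2 W ci w1 w2 -> is_hedge2 W ci w3 w4 ->
  (j = 3 /\ k = co) \/ (j = co /\ k = 3) ->
  coord j w2 = coord j w3 -> coord k w4 = coord k w1 -> False.
Proof.
move=> hc V1 V2 V3 V4 [n12 [n13 [n14 [n23 [n24 n34]]]]] H12 H34 hjk Ej Ek.
have n21 : w2 <> w1 by move/esym. have n31 : w3 <> w1 by move/esym.
have n41 : w4 <> w1 by move/esym. have n32 : w3 <> w2 by move/esym.
have n42 : w4 <> w2 by move/esym. have n43 : w4 <> w3 by move/esym.
have Ej' := esym Ej; have Ek' := esym Ek.
case: hjk => [[ej ek]|[ej ek]]; subst j k.
- have [i0 [d [h0 hd [[e2 e3]|[e2 e3]]]]] := col_pair V2 V3 n23 Ej; subst w2 w3.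
  + by apply: (core hc h0 hd H12 (hedge_sym H34)).
  + by apply: (core hc h0 hd (hedge_sym H34) H12).
- have [i0 [d [h0 hd [[e4 e1]|[e4 e1]]]]] := col_pair V4 V1 (fun e => n14 (esym e)) Ek; subst w4 w1.
  + by apply: (core hc h0 hd H34 (hedge_sym H12)).
  + by apply: (core hc h0 hd (hedge_sym H12) H34).
Qed.

Lemma case3 w1 w2 w3 w4 j k : V w1 -> V w2 -> V w3 -> V w4 ->
  (w1 <> w2 /\ w1 <> w3 /\ w1 <> w4 /\ w2 <> w3 /\ w2 <> w4 /\ w3 <> w4) ->
  coord 3 w1 = coord 3 w2 -> coord 3 w3 = coord 3 w4 ->
  (j = 1 /\ k = 2) \/ (j = 2 /\ k = 1) ->
  coord j w2 = coord j w3 -> coord k w4 = coord k w1 -> False.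
Proof.
move=> V1 V2 V3 V4 [n12 [n13 [n14 [n23 [n24 n34]]]]] E12 E34 hjk Ej Ek.
have [i [c [hi hc O1]]] := col_pair V1 V2 n12 E12.
have [i' [d [hi' hd O2]]] := col_pair V3 V4 n34 E34.
case: O1 => [[e1 e2]|[e1 e2]]; case: O2 => [[e3 e4]|[e3 e4]]; subst w1 w2 w3 w4;
case: hjk => [[ej ek]|[ej ek]]; subst j k; move: Ej Ek => /= Ej Ek.
- exact: (P2 hi' hi hd hc Ek (esym Ej)).
- exact: (P2 hi hi' hc hd Ej (esym Ek)).
- have ei := sc_inj hi hi' Ej; subst i'.
  have ec := P1l hi hd hc Ek; subst d; by apply: n14.
- subst i'; have ec := P1r hi hc hd Ej; subst d; by apply: n23.
- subst i'; have ec := P1r hi hd hc Ek; subst d; by apply: n14.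
- have ei := sc_inj hi' hi Ek; subst i'.
  have ec := P1l hi hc hd Ej; subst d; by apply: n23.
- exact: (P2 hi hi' hc hd (esym Ek) Ej).
- exact: (P2 hi' hi hd hc (esym Ej) Ek).
Qed.

Lemma no_bad : ~ bad4cycle W.
Proof.
move=> [w1 [w2 [w3 [w4 [i [j [k [[W1 W2 W3 W4] [D [[hi [hj [hk [nij [nik njk]]]]] [H12 H34 Ej Ek]]]]]]]]]]].
have V1 := proj1 (HW _) W1; have V2 := proj1 (HW _) W2.
have V3 := proj1 (HW _) W3; have V4 := proj1 (HW _) W4.
move: hi hj hk; rewrite !inE => hi hj hk.
case/orP: hi => [/eqP ei|/orP [/eqP ei|/eqP ei]]; subst i.
- apply: (case12 (ci:=1) (co:=2) _ V1 V2 V3 V4 D H12 H34 _ Ej Ek); first by left.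
  case/orP: hj nij njk => [/eqP|/orP [/eqP|/eqP]] -> // _;
  case/orP: hk nik => [/eqP|/orP [/eqP|/eqP]] -> //; by [left | right].
- apply: (case12 (ci:=2) (co:=1) _ V1 V2 V3 V4 D H12 H34 _ Ej Ek); first by right.
  case/orP: hj nij njk => [/eqP|/orP [/eqP|/eqP]] -> // _;
  case/orP: hk nik => [/eqP|/orP [/eqP|/eqP]] -> //; by [left | right].
- have [_ _ E12] := hedge_in H12; have [_ _ E34] := hedge_in H34.
  apply: (case3 V1 V2 V3 V4 D (esym E12) (esym E34) _ Ej Ek).
  case/orP: hj nij njk => [/eqP|/orP [/eqP|/eqP]] -> // _;
  case/orP: hk nik => [/eqP|/orP [/eqP|/eqP]] -> //; by [left | right].
Qed.

End Blocks.

Theorem mainTheorem8 (n1 n2 n3 : nat) :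
  3 <= n1 -> 3 <= n2 -> n1 <= n3 -> n2 <= n3 ->
  3 * maxn n1 n2 <= 2 * n3 -> 2 * n3 <= n1 * n2 ->
  forall W : vset, middle_cone n1 n2 n3 W -> ~ bad4cycle W.
Proof.
move=> hn1 hn2 h13 h23 hmax hprod W.
have h3 : 3 * n1 <= 2 * n3 by lia.
have U := @inb_uniq n1 n3 hn1 h13 h3 n2 hn2 hprod.
have R := @inb_range n1 n3 hn1 h13 h3 n2 hn2 hprod.
rewrite /middle_cone; case: ifP => hc.
- move=> [x [z [WLz xn HWe]]].
  move: hc => /andP [o hk].
  move: (WLz) => [i0 [c0 [hi0 hc0 hb0 E0]]].
  case: E0 => ex y1 ez; subst i0 c0.
  have Hmd : true -> [/\ odd n2, kk n1 n2 n3 <= 1, 0 < x <= n1, in_block n1 n3 x z & x \notin [:: 1; 2; n1]].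
    by move=> _; split.
  have Hmd2 : odd n2 -> kk n1 n2 n3 <= 1 -> true by [].
  apply: (no_bad hn1 h13 h3 hn2 hprod Hmd Hmd2) => v.
  rewrite HWe; split.
  + case => [[[[i [c [hi hc hb ->]]]|[i [c [hi hc hb ->]]]] nv]|->].
    * exists i, c; split => //; left; rewrite /Lv /yl /=.
      case: eqP => [ecz|//]; subst c.
      have ei : i = x by apply: (U _ _ _ _ _ hb hb0) => //; lia.
      by subst i; exfalso; apply: nv; rewrite -y1.
    * by exists i, c; split => //; right.
    * by exists x, z; split => //; left; rewrite /Lv /yl eqxx.
  + move=> [i [c [hi hb [->|->]]]].
    * rewrite /Lv /yl /=; case: eqP => ecz.
      - subst c; right; have ei : i = x by apply: (U _ _ _ _ _ hb hb0) => //; lia.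
        by subst i.
      - left; split; first by left; exists i, c; split => //; apply: (R i c hi hb).
        by case=> _ _ e; apply: ecz.
    * left; split; first by right; exists i, c; split => //; apply: (R i c hi hb).
      case=> e1 _ e3; subst c.
      have ei : i = x by apply: (U _ _ _ _ _ hb hb0) => //; lia.
      have x1 : x <> 1 by move: xn; rewrite !inE; case: eqP.
      subst i; move: e1; rewrite /succ1; case: eqP => _; lia.
- move=> HWe.
  have Hmd : false -> [/\ odd n2, kk n1 n2 n3 <= 1, 0 < 0 <= n1, in_block n1 n3 0 0 & 0 \notin [:: 1; 2; n1]].
    by [].
  have Hmd2 : odd n2 -> kk n1 n2 n3 <= 1 -> false.
    by move=> o k; move: hc; rewrite o k.
  apply: (no_bad hn1 h13 h3 hn2 hprod Hmd Hmd2) => v.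
  rewrite HWe /W0; split.
  + case => [[i [c [hi hcr hb ->]]]|[i [c [hi hcr hb ->]]]].
    * by exists i, c; split => //; left.
    * by exists i, c; split => //; right.
  + move=> [i [c [hi hb [->|->]]]].
    * by left; exists i, c; split => //; apply: (R i c hi hb).
    * by right; exists i, c; split => //; apply: (R i c hi hb).
Qed.
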